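(* Let $G$ and $H$ be two vertex-disjoint directed co-graphs. Then $\mathrm{tw}(\mathrm{un}(G\oslash H))>\mathrm{dtw}(G\oslash H)$.
   Context: Digraphs are finite, without loops or multiple arcs. Operations on vertex-disjoint digraphs $G_1,\ldots,G_k$: disjoint union $\oplus$ (union of vertex and arc sets); series composition $\otimes$ (disjoint union plus all arcs in both directions between vertices of different $G_i$); order composition $G_1\oslash\cdots\oslash G_k$ (disjoint union plus all arcs from vertices of $G_i$ to vertices of $G_j$ for $i<j$). Directed co-graphs: single-vertex digraphs, and closure under these three operations. $\mathrm{un}(G)$ is the underlying undirected graph of $G$ and $\mathrm{tw}$ is undirected tree-width. Directed tree-width: for $Z\subseteq V$, $S\subseteq V$ is $Z$-normal if no directed walk in $G-Z$ with first and last vertex in $S$ uses a vertex of $G-(Z\cup S)$. A directed tree-decomposition is $(T,\mathcal{X},\mathcal{W})$ with $T=(V_T,E_T)$ an out-tree (rooted, arcs directed away from root; $u\le v$ means a directed path of $\ge0$ arcs from $u$ to $v$), $\mathcal{X}=\{X_e:e\in E_T\}$, $\mathcal{W}=\{W_r:r\in V_T\}$ subsets of $V$, such that $\mathcal{W}$ partitions $V$ into nonempty sets and for each $(u,v)\in E_T$ the set $\bigcup\{W_r: v\le r\}$ is $X_{(u,v)}$-normal; width $\max_r|W_r\cup\bigcup_{e\sim r}X_e|-1$ ($e\sim r$: $r$ is an end of $e$); $\mathrm{dtw}(G)$ is the minimum width. *)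

(* Defs.v *)
From mathcomp Require Import all_boot.
Set Implicit Arguments. Unset Strict Implicit. Unset Printing Implicit Defensive.

(* A digraph is a finite type V of vertices with an arc relation E : rel V
   (E x y = there is an arc from x to y). *)

(** The k-ary operations are iterates of the
    binary ones. *)
Inductive cog (T : finType) (E : rel T) : {set T} -> Prop :=
| cog_single x : ~~ E x x -> cog E [set x]
| cog_union (A B : {set T}) : [disjoint A & B] -> cog E A -> cog E B ->
    (forall x y, x \in A -> y \in B -> ~~ E x y && ~~ E y x) -> cog E (A :|: B)
| cog_series (A B : {set T}) : [disjoint A & B] -> cog E A -> cog E B ->
    (forall x y, x \in A -> y \in B -> E x y && E y x) -> cog E (A :|: B)
| cog_order (A B : {set T}) : [disjoint A & B] -> cog E A -> cog E B ->
    (forall x y, x \in A -> y \in B -> E x y && ~~ E y x) -> cog E (A :|: B).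

Definition dcograph (T : finType) (E : rel T) : Prop := cog E [set: T].

Definition ocomp (T1 T2 : finType) (E1 : rel T1) (E2 : rel T2) : rel (T1 + T2) :=
  fun x y =>
    match x, y with
    | inl a, inl b => E1 a b
    | inr a, inr b => E2 a b
    | inl _, inr _ => true
    | inr _, inl _ => false
    end.

Definition un (V : finType) (E : rel V) : rel V := fun x y => E x y || E y x.

Definition is_tree (I : finType) (t : rel I) : Prop :=
  [/\ symmetric t, irreflexive t, 0 < #|I|,
      (forall i j, connect t i j) &
      #|[set p : I * I | t p.1 p.2]| = (#|I|).-1.*2].

Definition td_width (V I : finType) (B : I -> {set V}) : nat :=
  (\max_(i : I) #|B i|).-1.

Definition tree_decomp (V I : finType) (g : rel V) (t : rel I) (B : I -> {set V}) : Prop :=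
  [/\ is_tree t,
      (forall v, exists i, v \in B i),
      (forall u v, g u v -> exists i, (u \in B i) && (v \in B i)) &
      (forall v i j, v \in B i -> v \in B j ->
         connect [rel a b | [&& t a b, v \in B a & v \in B b]] i j)].

Definition has_td (V : finType) (g : rel V) (k : nat) : Prop :=
  exists (I : finType) (t : rel I) (B : I -> {set V}),
    tree_decomp g t B /\ td_width B = k.

Definition is_treewidth (V : finType) (g : rel V) (k : nat) : Prop :=
  has_td g k /\ forall k', has_td g k' -> k <= k'.

Definition is_outtree (I : finType) (a : rel I) (r : I) : Prop :=
  [/\ (forall i, ~~ a i r),
      (forall j, j != r -> exists! i, a i j) &
      (forall j, connect a r j)].

Definition normal (V : finType) (E : rel V) (Z S : {set V}) : Prop :=
  forall (x : V) (p : seq V),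
    path E x p -> all (fun y => y \notin Z) (x :: p) ->
    x \in S -> last x p \in S -> all (fun y => y \in Z :|: S) (x :: p).

Definition dtd_width (V I : finType) (a : rel I) (X : I -> I -> {set V})
    (W : I -> {set V}) : nat :=
  (\max_(r : I) #|W r :|: (\bigcup_(s | a r s) X r s)
                      :|: (\bigcup_(s | a s r) X s r)|).-1.

Definition dtree_decomp (V I : finType) (E : rel V) (a : rel I) (r : I)
    (X : I -> I -> {set V}) (W : I -> {set V}) : Prop :=
  [/\ is_outtree a r,
      (forall i, W i != set0),
      (forall i j, i != j -> [disjoint W i & W j]),
      (forall v, exists i, v \in W i) &
      (forall u v, a u v -> normal E (X u v) (\bigcup_(s | connect a v s) W s))].

Definition has_dtd (V : finType) (E : rel V) (k : nat) : Prop :=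
  exists (I : finType) (a : rel I) (r : I) (X : I -> I -> {set V}) (W : I -> {set V}),
    dtree_decomp E a r X W /\ dtd_width a X W = k.

Definition is_dtreewidth (V : finType) (E : rel V) (k : nat) : Prop :=
  has_dtd E k /\ forall k', has_dtd E k' -> k <= k'.

(* Main.v *)
Require Import Defs.
From mathcomp Require Import all_boot zify.
Set Implicit Arguments. Unset Strict Implicit. Unset Printing Implicit Defensive.

Lemma path_cross (T : Type) (e : T -> T -> bool) (P : T -> bool) x p :
  path e x p -> ~~ P x -> P (last x p) ->
  exists c c', [/\ e c c', ~~ P c & P c'].
Proof.
elim: p x => [|y p IH] x /=; first by move=> _ /negPf ->.
case/andP=> exy py Px Pl.
case Py: (P y); first by exists x, y; rewrite exy Px.
by apply: (IH y py); rewrite ?Py.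
Qed.

Section Rooted.
Variables (I : finType) (t : rel I) (rho : I).
Hypotheses (tsym : symmetric t) (tirr : irreflexive t) (tcon : forall i j, connect t i j)
  (tcard : #|[set p : I * I | t p.1 p.2]| = (#|I|).-1.*2).

Definition Pd (i : I) (n : nat) : bool :=
  [exists p : n.-tuple I, path t rho p && (last rho p == i)].

Lemma Pd_seq i n : reflect (exists s, [/\ size s = n, path t rho s & last rho s = i]) (Pd i n).
Proof.
apply: (iffP existsP) => [[p /andP[pp /eqP lp]]|[s [<- ps ls]]].
  by exists p; rewrite size_tuple.
by exists (in_tuple s); rewrite ps ls eqxx.
Qed.

Lemma dex i : exists n, Pd i n.
Proof.
have /connectP[p pp lp] := tcon rho i.
by exists (size p); apply/Pd_seq; exists p.
Qed.

Definition d i := ex_minn (dex i).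

Lemma d_spec i : Pd i (d i) /\ forall n, Pd i n -> d i <= n.
Proof. by rewrite /d; case: ex_minnP. Qed.

Lemma d_rho : d rho = 0.
Proof.
have [_ H] := d_spec rho; apply/eqP; rewrite -leqn0; apply: H.
by apply/Pd_seq; exists [::].
Qed.

Lemma d0 i : d i = 0 -> i = rho.
Proof.
move=> H; have [/Pd_seq [s [ss _ ls]] _] := d_spec i.
by move: ss ls; rewrite H; case: s.
Qed.

Lemma d_edge i j : t i j -> d j <= (d i).+1.
Proof.
move=> tij; have [/Pd_seq [s [ss ps ls]] _] := d_spec i.
have [_ H] := d_spec j; apply: H; apply/Pd_seq; exists (rcons s j).
by rewrite size_rcons ss rcons_path ps ls tij last_rcons.
Qed.

Lemma d_pred j : j != rho -> exists i, t i j /\ d i = (d j).-1.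
Proof.
move=> nj; have [/Pd_seq [s [ss ps ls]] _] := d_spec j.
move: ss ps ls; case/lastP: s => [|s y]; first by move=> _ _ /= E; rewrite E eqxx in nj.
rewrite size_rcons rcons_path last_rcons => ss /andP[ps ty] ey; subst y.
exists (last rho s); split => //.
have [_ H] := d_spec (last rho s).
have h1 : d (last rho s) <= size s by apply: H; apply/Pd_seq; exists s.
have h2 := d_edge ty. lia.
Qed.

Definition par j := if j == rho then rho else odflt rho [pick i | t i j && (d i == (d j).-1)].

Lemma par_rho : par rho = rho.
Proof. by rewrite /par eqxx. Qed.

Lemma par_spec j : j != rho -> [/\ t (par j) j, d (par j) = (d j).-1 & 0 < d j].
Proof.
move=> nj; rewrite /par (negPf nj).
case: pickP => [i /andP[tij /eqP dij]|H] /=.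
  split=> //; rewrite lt0n; apply/negP => /eqP /d0 E; by rewrite E eqxx in nj.
have [i [tij dij]] := d_pred nj.
by move: (H i); rewrite tij dij eqxx.
Qed.

Lemma d_par j : d (par j) = (d j).-1.
Proof.
case: (eqVneq j rho) => [->|nj]; first by rewrite par_rho d_rho.
by case: (par_spec nj).
Qed.


Lemma edge_par x y : t x y -> (x != rho) && (y == par x) || (y != rho) && (x == par y).
Proof.
move=> txy.
have S1 : [set j | j != rho] = [set~ rho] by apply/setP=> j; rewrite !inE.
set A := [set (par j, j) | j in [set j | j != rho]].
set A' := [set (j, par j) | j in [set j | j != rho]].
have cA : #|A| = #|I|.-1.
  by rewrite card_imset ?S1 ?cardsC1 // => a b [].
have cA' : #|A'| = #|I|.-1.
  by rewrite card_imset ?S1 ?cardsC1 // => a b [].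
have dis : A :&: A' = set0.
  apply/setP=> [[u v]]; rewrite !inE; apply/negP=> /andP[/imsetP[j]].
  rewrite inE => nj [-> ->] /imsetP[j']; rewrite inE => nj' [E1 E2].
  have [_ d1 p1] := par_spec nj; have [_ d2 p2] := par_spec nj'.
  rewrite E1 in d1; rewrite -E2 in d2; lia.
have sub : A :|: A' \subset [set p : I * I | t p.1 p.2].
  apply/subsetP=> [[u v]]; rewrite !inE => /orP[] /imsetP[j]; rewrite inE => nj [-> ->] /=;
  by have [tj _ _] := par_spec nj; rewrite // tsym.
have : A :|: A' == [set p : I * I | t p.1 p.2].
  rewrite eqEcard sub tcard cardsU dis cards0 cA cA'; lia.
move/eqP=> E; have : (x, y) \in A :|: A' by rewrite E inE.
rewrite inE => /orP[] /imsetP[j]; rewrite inE => nj [-> ->].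
  by rewrite nj eqxx orbT.
by rewrite nj eqxx.
Qed.


Lemma iter_rho n : iter n par rho = rho.
Proof. by elim: n => //= n ->; rewrite par_rho. Qed.

Lemma d_iter n y : d (iter n par y) = d y - n.
Proof. elim: n => [|n IH] /=; first by rewrite subn0. rewrite d_par IH; lia. Qed.

Lemma iter_d y : iter (d y) par y = rho.
Proof. by apply: d0; rewrite d_iter subnn. Qed.

Definition anc x y := [exists n : 'I_(d y).+1, iter n par y == x].

Lemma ancP x y : reflect (exists n, iter n par y = x) (anc x y).
Proof.
apply: (iffP existsP) => [[n /eqP <-]|[n <-]]; first by exists n.
case: (leqP n (d y)) => hn; first by exists (Ordinal (hn : n < (d y).+1)).
exists ord_max => /=; rewrite iter_d.
by rewrite -(subnK (ltnW hn)) iterD iter_d iter_rho.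
Qed.

Lemma anc_refl x : anc x x. Proof. by apply/ancP; exists 0. Qed.
Lemma anc_par y : anc (par y) y. Proof. by apply/ancP; exists 1. Qed.
Lemma anc_rho y : anc rho y. Proof. by apply/ancP; exists (d y); rewrite iter_d. Qed.
Lemma anc_trans x y z : anc x y -> anc y z -> anc x z.
Proof.
move=> /ancP[m <-] /ancP[n <-]; apply/ancP; exists (m + n); by rewrite iterD.
Qed.
Lemma anc_d x y : anc x y -> d x <= d y.
Proof. by move=> /ancP[n <-]; rewrite d_iter leq_subr. Qed.
Lemma anc_eq x y : anc x y -> d x = d y -> x = y.
Proof.
move=> /ancP[n <-]; rewrite d_iter => E.
case: n E => [//|n] E.
have y0 : d y = 0 by lia.
by rewrite (d0 y0) iter_rho.
Qed.
Lemma anc_antisym x y : anc x y -> anc y x -> x = y.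
Proof. move=> h1 h2; apply: anc_eq => //; have := anc_d h1; have := anc_d h2; lia. Qed.
Lemma anc_lt x y : anc x y -> x != y -> d x < d y.
Proof.
move=> h ne; rewrite ltn_neqAle anc_d // andbT; apply/eqP=> E.
by rewrite (anc_eq h E) eqxx in ne.
Qed.
Lemma anc_total x y z : anc x z -> anc y z -> anc x y || anc y x.
Proof.
move=> /ancP[m <-] /ancP[n <-].
case: (leqP m n) => h.
  apply/orP; right; apply/ancP; exists (n - m); by rewrite -iterD subnK.
apply/orP; left; apply/ancP; exists (m - n); rewrite -iterD subnK //; exact: ltnW.
Qed.
Lemma anc_step x y : anc x y -> x != y -> anc x (par y).
Proof.
move=> /ancP[[|n] <-] //=; first by rewrite eqxx.
by move=> _; apply/ancP; exists n; rewrite -iterSr.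
Qed.

Lemma cross x c c' : t c c' -> anc x c -> ~~ anc x c' -> [/\ c = x, x != rho & c' = par x].
Proof.
move=> tc ac nac; case/orP: (edge_par tc) => /andP[nc /eqP E].
  case: (eqVneq x c) => [E'|ne]; first by subst.
  by rewrite E (anc_step ac ne) in nac.
have acc : anc c c' by rewrite E anc_par.
by rewrite (anc_trans ac acc) in nac.
Qed.


Variables (V : finType) (B : I -> {set V}).

Definition Rv v := [rel a b | [&& t a b, v \in B a & v \in B b]].

Definition top v := odflt rho [pick i | (v \in B i) && [forall j, (v \in B j) ==> (d i <= d j)]].

Lemma top_spec v i0 : v \in B i0 -> v \in B (top v) /\ forall j, v \in B j -> d (top v) <= d j.
Proof.
move=> vi0; rewrite /top; case: pickP => [i /andP[vi /forallP H]|H] /=.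
  by split=> // j vj; exact: (implyP (H j) vj).
case: (@arg_minnP _ i0 (fun i => v \in B i) d vi0) => i vi mi.
have := H i; rewrite vi /=; move/negP; case; apply/forallP=> j; apply/implyP; exact: mi.
Qed.

Lemma top_anc v j : (forall i j, v \in B i -> v \in B j -> connect (Rv v) i j) ->
  v \in B j -> anc (top v) j.
Proof.
move=> conn vj; have [vt mt] := top_spec vj.
have /connectP[p pp lp] := conn _ _ vt vj.
case: (boolP (anc (top v) j)) => // nj.
have h1 : ~~ ~~ anc (top v) (top v) by rewrite anc_refl.
have h2 : ~~ anc (top v) (last (top v) p) by rewrite -lp.
have [c [c' [/andP[tc /andP[vc vc']] /negPn ac nac]]] :=
  @path_cross _ _ (fun c => ~~ anc (top v) c) _ _ pp h1 h2.
have [E nr E'] := cross tc ac nac.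
have := mt _ vc'; rewrite E' d_par; have [_ _] := par_spec nr; lia.
Qed.

Lemma between v i j y : (forall i j, v \in B i -> v \in B j -> connect (Rv v) i j) ->
  v \in B i -> v \in B j -> anc i y -> anc y j -> v \in B y.
Proof.
move=> conn vi vj aiy ayj.
case: (eqVneq i y) => [<- //|ne].
have /connectP[p pp lp] := conn _ _ vi vj.
have nyi : ~~ anc y i by apply/negP=> h; rewrite (anc_antisym aiy h) eqxx in ne.
have h2 : anc y (last i p) by rewrite -lp.
have [c [c' [/andP[tc /andP[vc vc']] nac ac]]] :=
  @path_cross _ _ (fun c => anc y c) _ _ pp nyi h2.
rewrite tsym in tc; have [E _ _] := cross tc ac nac.
by rewrite -E.
Qed.


Variables (E : rel V) (U : {set V}) (av u0 : V) (k : nat).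
Hypotheses
  (closU : forall x p, path E x p -> x \in U -> last x p \in U -> all (fun y => y \in U) (x :: p))
  (edgeU : forall u v, u \in U -> v \in U -> E u v -> exists i, (u \in B i) && (v \in B i))
  (conn : forall v i j, v \in B i -> v \in B j -> connect (Rv v) i j)
  (avU : av \notin U) (avrho : av \in B rho) (u0U : u0 \in U) (u0rho : u0 \in B rho)
  (apex : forall u, u \in U -> exists i, (av \in B i) && (u \in B i))
  (bound : forall i, #|B i| <= k.+1).

Lemma topU u : u \in U -> u \in B (top u).
Proof. move=> uU; have [i /andP[_ ui]] := apex uU; by have [] := top_spec ui. Qed.

Lemma top_u0 : top u0 = rho.
Proof. apply: d0; have := anc_d (top_anc (@conn u0) u0rho); rewrite d_rho; lia. Qed.

Lemma apex_top u : u \in U -> av \in B (top u).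
Proof.
move=> uU; have [j /andP[aj uj]] := apex uU.
exact: (between (@conn av) avrho aj (anc_rho _) (top_anc (@conn u) uj)).
Qed.

Definition Iset := [set top u | u in U].

Lemma rhoI : rho \in Iset.
Proof. by rewrite -top_u0; apply: imset_f. Qed.

Definition par' y := [arg max_(i > rho | (i \in Iset) && anc i y && (i != y)) d i].

Lemma par'_spec y : y != rho ->
  [/\ par' y \in Iset, anc (par' y) y, par' y != y &
      forall z, z \in Iset -> anc z y -> z != y -> d z <= d (par' y)].
Proof.
move=> ny; rewrite /par'.
have P0 : (rho \in Iset) && anc rho y && (rho != y) by rewrite rhoI anc_rho eq_sym ny.
case: (@arg_maxnP _ rho (fun i => (i \in Iset) && anc i y && (i != y)) d P0) => i /andP[/andP[iI aiy] niy] mi.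
split=> // z zI azy nzy; apply: mi; by rewrite zI azy nzy.
Qed.

Definition I' := {i : I | i \in Iset}.
Definition a' : rel I' := fun x y => (val y != rho) && (par' (val y) == val x).
Definition W' (x : I') := [set u in U | top u == val x].
Definition X' (x y : I') := (B (val y) :&: U) :\: [set u in U | anc (val y) (top u)].

Lemma conn'_anc (x y : I') : connect a' x y -> anc (val x) (val y).
Proof.
move/connectP=> [p pp ->]; elim: p x pp => [|z p IH] x /=; first by rewrite anc_refl.
case/andP=> /andP[nz /eqP Ez] pp; apply: anc_trans (IH _ pp); rewrite -Ez; by have [] := par'_spec nz.
Qed.

Lemma anc_conn' (x y : I') : anc (val x) (val y) -> connect a' x y.
Proof.
move: {2}(d (val y)) (leqnn (d (val y))) => n; elim: n y => [|n IH] y hd axy.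
  have yr : val y = rho by apply: d0; lia.
  have : x = y by apply: val_inj; apply: anc_antisym axy _; rewrite yr anc_rho.
  by move=> ->; apply: connect0.
case: (eqVneq x y) => [-> |nxy]; first exact: connect0.
have nxy' : val x != val y by apply: contra nxy => /eqP h; apply/eqP/val_inj.
have ny : val y != rho.
  by apply/negP=> /eqP yr; move: nxy'; rewrite (anc_antisym axy _) ?eqxx // yr anc_rho.
have [pI apy npy mp] := par'_spec ny.
have azy : a' (exist _ (par' (val y)) pI) y by rewrite /a' ny eqxx.
have c1 : connect a' x (exist _ (par' (val y)) pI).
  apply: (IH (exist _ (par' (val y)) pI)).
    change (d (par' (val y)) <= n); rewrite -ltnS; exact: leq_trans (anc_lt apy npy) hd.
  change (anc (val x) (par' (val y))).
  have [apx|apx] := orP (anc_total axy apy); first exact: apx.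
  have h := mp _ (valP x) axy nxy'.
  have e : d (par' (val y)) = d (val x) by apply/eqP; rewrite eqn_leq h anc_d.
  by rewrite (anc_eq apx e) anc_refl.
exact: connect_trans c1 (connect1 azy).
Qed.


Lemma memS (y : I') u :
  (u \in \bigcup_(s | connect a' y s) W' s) = (u \in U) && anc (val y) (top u).
Proof.
apply/bigcupP/andP => [[s cs]|[uU ay]].
  rewrite inE => /andP[uU /eqP tu]; split=> //; rewrite tu; exact: conn'_anc.
exists (exist _ (top u) (imset_f top uU)); first exact: anc_conn'.
by rewrite inE uU eqxx.
Qed.

Lemma stepS Y u u' : u \in U -> anc Y (top u) -> u' \in U -> E u u' ->
  u' \notin (B Y :&: U) :\: [set w in U | anc Y (top w)] -> anc Y (top u').
Proof.
move=> uU ay u'U e nX.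
have [j /andP[uj u'j]] := edgeU uU u'U e.
have aYj := anc_trans ay (top_anc (@conn u) uj).
have a'j := top_anc (@conn u') u'j.
have [//|h] := orP (anc_total aYj a'j).
have u'Y := between (@conn u') (topU u'U) u'j h aYj.
case: (boolP (anc Y (top u'))) => // nY.
by move: nX; rewrite !inE u'Y u'U (negPf nY).
Qed.

Lemma normal_part (x y : I') : normal E (X' x y) (\bigcup_(s | connect a' y s) W' s).
Proof.
move=> z p pp nz zS lS.
have allS : all (fun w => (w \in U) && anc (val y) (top w)) (z :: p).
  rewrite memS in zS; rewrite memS in lS.
  have allU := closU pp (proj1 (andP zS)) (proj1 (andP lS)).
  elim: p z pp nz allU zS {lS} => [|w p IH] z /=; first by move=> _ _ _ ->.
  case/andP=> ezw pp /andP[nzz nzr] /andP[zU /andP[wU allU]] zS.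
  rewrite zS /=; have nzr' := nzr; case/andP: nzr' => nw _.
  apply: (IH w pp nzr); first by rewrite /= wU allU.
  rewrite wU /=; exact: stepS (proj2 (andP zS)) wU ezw nw.
apply: sub_all allS => w /andP[wU aw]; by rewrite inE memS wU aw orbT.
Qed.

Lemma width_part (i : I') :
  #|W' i :|: (\bigcup_(s | a' i s) X' i s) :|: (\bigcup_(s | a' s i) X' s i)| <= k.
Proof.
have sub : W' i :|: (\bigcup_(s | a' i s) X' i s) :|: (\bigcup_(s | a' s i) X' s i)
    \subset B (val i) :&: U.
  apply/subsetP => w; rewrite !inE => /orP[/orP[|]|].
  - by case/andP=> wU /eqP <-; rewrite wU andbT; exact: topU.
  - case/bigcupP=> s /andP[ns /eqP ps]; rewrite !inE => /andP[na /andP[ws wU]].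
    rewrite wU andbT.
    have [_ aps _ mp] := par'_spec ns.
    rewrite ps in aps mp.
    have ats := top_anc (@conn w) ws.
    have nts : top w != val s by apply: contra na => /eqP <-; rewrite wU anc_refl.
    have h := mp _ (imset_f top wU) ats nts.
    have ati : anc (top w) (val i).
      have [//|h2] := orP (anc_total ats aps).
      have e : val i = top w.
        apply: (anc_eq h2); apply/eqP; rewrite eqn_leq h andbT; exact: anc_d h2.
      by rewrite e anc_refl.
    exact: between (@conn w) (topU wU) ws ati aps.
  - by case/bigcupP=> s _; rewrite !inE => /andP[_ /andP[-> ->]].
have avi : av \in B (val i) :\: U.
  have /imsetP[u uU ->] := valP i; by rewrite inE avU apex_top.
have := cardsID U (B (val i)).
have := subset_leq_card sub; have := bound (val i).
have : 0 < #|B (val i) :\: U| by apply/card_gt0P; exists av.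
rewrite setIC; lia.
Qed.


Lemma part : exists (J : finType) (a : rel J) (r : J) (X : J -> J -> {set V}) (W : J -> {set V}),
  [/\ is_outtree a r, (forall i, W i != set0), (forall i j, i != j -> [disjoint W i & W j]),
      (forall i, W i \subset U) & (forall u, u \in U -> exists i, u \in W i)] /\
      (forall x y, a x y -> normal E (X x y) (\bigcup_(s | connect a y s) W s)) /\
      (forall i, #|W i :|: (\bigcup_(s | a i s) X i s) :|: (\bigcup_(s | a s i) X s i)| <= k).
Proof.
exists I', a', (exist _ rho rhoI), X', W'; split; [split|split].
- split.
  + by move=> i; rewrite /a' /= eqxx.
  + move=> j nj.
    have nj' : val j != rho.
      apply: contra nj => /eqP e; apply/eqP; exact: val_inj.
    have [pI _ _ _] := par'_spec nj'.
    exists (exist (fun x => x \in Iset) _ pI); split; first by rewrite /a' nj' eqxx.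
    by move=> i' /andP[_ /eqP e]; apply: val_inj; rewrite /= e.
  + by move=> j; apply: anc_conn'; exact: anc_rho.
- move=> i; apply/set0Pn; have /imsetP[u uU e] := valP i.
  by exists u; rewrite inE uU e eqxx.
- move=> i j ne; rewrite -setI_eq0; apply/eqP/setP => u; rewrite !inE; apply/negP.
  move=> /andP[/andP[_ /eqP e1] /andP[_ /eqP e2]].
  by move/eqP: ne; apply; apply: val_inj; rewrite -e1 -e2.
- by move=> i; apply/subsetP => u; rewrite inE => /andP[].
- move=> u uU; exists (exist _ (top u) (imset_f top uU)); by rewrite inE uU eqxx.
- move=> x y _; exact: normal_part.
- exact: width_part.
Qed.

End Rooted.

Lemma connect_map (T T' : finType) (e : rel T) (e' : rel T') (f : T -> T') x y :
  (forall x y, e x y -> e' (f x) (f y)) -> connect e x y -> connect e' (f x) (f y).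
Proof.
move=> h /connectP[p pp ->]; apply/connectP; exists (map f p); last by rewrite last_map.
by elim: p x pp => //= z p IH x /andP[exz pp]; rewrite h // IH.
Qed.

Section Glue.
Variables (V : finType) (E : rel V) (UH UG : {set V}) (k : nat)
  (J2 : finType) (a2 : rel J2) (r2 : J2) (X2 : J2 -> J2 -> {set V}) (W2 : J2 -> {set V})
  (J1 : finType) (a1 : rel J1) (r1 : J1) (X1 : J1 -> J1 -> {set V}) (W1 : J1 -> {set V}).

Definition sa : rel (J2 + J1) := fun x y =>
  match x, y with
  | inl x, inl y => a2 x y
  | inr x, inr y => a1 x y
  | inl x, inr y => (x == r2) && (y == r1)
  | inr _, inl _ => false
  end.
Definition sX (x y : J2 + J1) : {set V} :=
  match x, y with
  | inl x, inl y => X2 x y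
  | inr x, inr y => X1 x y
  | _, _ => set0
  end.
Definition sW (x : J2 + J1) : {set V} :=
  match x with inl x => W2 x | inr x => W1 x end.

Hypotheses (nr2 : forall i, ~~ a2 i r2) (nr1 : forall i, ~~ a1 i r1).

Lemma lift2 x y : connect a2 x y -> connect sa (inl x) (inl y).
Proof. by apply: connect_map. Qed.
Lemma lift1 x y : connect a1 x y -> connect sa (inr x) (inr y).
Proof. by apply: connect_map. Qed.

Lemma down1 y s : connect sa (inr y) s -> exists s', s = inr s' /\ connect a1 y s'.
Proof.
move/connectP=> [p pp ->]; elim: p y pp => [|[z|z] p IH] y /=; first by exists y.
  by [].
case/andP=> ayz pp; have [s' [-> c]] := IH _ pp.
by exists s'; split=> //; exact: connect_trans (connect1 ayz) c.
Qed.

Lemma down2 y s : y != r2 -> connect sa (inl y) s -> exists s', s = inl s' /\ connect a2 y s'.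
Proof.
move=> + /connectP[p pp ->]; elim: p y pp => [|[z|z] p IH] y /=; first by exists y.
  case/andP=> ayz pp ny.
  have nz : z != r2 by apply: contraNneq (nr2 y) => <-.
  have [s' [-> c]] := IH _ pp nz.
  by exists s'; split=> //; exact: connect_trans (connect1 ayz) c.
by case/andP=> /andP[/eqP -> _] _; rewrite eqxx.
Qed.


Hypotheses (disj : UH :&: UG = set0) (cov : forall v, (v \in UH) || (v \in UG))
  (clos : forall x p, path E x p -> x \in UG -> last x p \in UG -> all (fun y => y \in UG) (x :: p))
  (up2 : forall j, j != r2 -> exists! i, a2 i j) (re2 : forall j, connect a2 r2 j)
  (ne2 : forall i, W2 i != set0) (dj2 : forall i j, i != j -> [disjoint W2 i & W2 j])
  (sub2 : forall i, W2 i \subset UH) (cov2 : forall u, u \in UH -> exists i, u \in W2 i)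
  (nm2 : forall x y, a2 x y -> normal E (X2 x y) (\bigcup_(s | connect a2 y s) W2 s))
  (wd2 : forall i, #|W2 i :|: (\bigcup_(s | a2 i s) X2 i s) :|: (\bigcup_(s | a2 s i) X2 s i)| <= k)
  (up1 : forall j, j != r1 -> exists! i, a1 i j) (re1 : forall j, connect a1 r1 j)
  (ne1 : forall i, W1 i != set0) (dj1 : forall i j, i != j -> [disjoint W1 i & W1 j])
  (sub1 : forall i, W1 i \subset UG) (cov1 : forall u, u \in UG -> exists i, u \in W1 i)
  (nm1 : forall x y, a1 x y -> normal E (X1 x y) (\bigcup_(s | connect a1 y s) W1 s))
  (wd1 : forall i, #|W1 i :|: (\bigcup_(s | a1 i s) X1 i s) :|: (\bigcup_(s | a1 s i) X1 s i)| <= k).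

Lemma glue_dtd : dtree_decomp E sa (inl r2) sX sW.
Proof.
split.
- split.
  + by case=> [i|i] //=; apply: nr2.
  + case=> [j|j] nj.
      have nj' : j != r2 by apply: contra nj => /eqP ->.
      have [i [ai ui]] := up2 nj'.
      exists (inl i); split=> // [[i'|i']] //= h; by rewrite (ui _ h).
    case: (eqVneq j r1) => [->|nj'].
      exists (inl r2); split; first by rewrite /= !eqxx.
      case=> [i'|i'] /=; first by case/andP=> /eqP ->.
      by move=> h; move: (nr1 i'); rewrite h.
    have [i [ai ui]] := up1 nj'.
    exists (inr i); split=> // [[i'|i']] /=; first by rewrite (negPf nj') andbF.
    by move=> h; rewrite (ui _ h).
  + case=> [j|j]; first exact: lift2.
    apply: connect_trans (lift1 (re1 j)); apply: connect1; by rewrite /= !eqxx.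
- by case=> i /=.
- case=> [i|i] [j|j] /= nij.
  + by apply: dj2; apply: contra nij => /eqP ->.
  + rewrite -setI_eq0 -subset0 -disj; apply: setISS; [exact: sub2 | exact: sub1].
  + rewrite -setI_eq0 -subset0 -disj setIC; apply: setISS; [exact: sub2 | exact: sub1].
  + by apply: dj1; apply: contra nij => /eqP ->.
- move=> v; case/orP: (cov v) => [/cov2 [i vi]|/cov1 [i vi]]; by [exists (inl i) | exists (inr i)].
- case=> [x|x] [y|y] //= axy.
  + have ny : y != r2 by apply: contraNneq (nr2 x) => <-.
    have -> : \bigcup_(s | connect sa (inl y) s) sW s = \bigcup_(s | connect a2 y s) W2 s.
      apply/setP=> u; apply/bigcupP/bigcupP => [[s cs us]|[s cs us]].
        have [s' [E' c']] := down2 ny cs; subst s; by exists s'.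
      by exists (inl s) => //; exact: lift2.
    exact: nm2.
  + case/andP: axy => _ /eqP ->.
    move=> z p pp _ zS lS.
    have sUG : forall u, u \in \bigcup_(s | connect sa (inr r1) s) sW s -> u \in UG.
      move=> u /bigcupP[s cs us]; have [s' [E' _]] := down1 cs; subst s.
      exact: (subsetP (sub1 s')).
    have allG := clos pp (sUG _ zS) (sUG _ lS).
    apply: sub_all allG => u uG; rewrite inE; apply/orP; right.
    have [i ui] := cov1 uG; apply/bigcupP; exists (inr i) => //; exact: lift1.
  + have -> : \bigcup_(s | connect sa (inr y) s) sW s = \bigcup_(s | connect a1 y s) W1 s.
      apply/setP=> u; apply/bigcupP/bigcupP => [[s cs us]|[s cs us]].
        have [s' [E' c']] := down1 cs; subst s; by exists s'.
      by exists (inr s) => //; exact: lift1.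
    exact: nm1.
Qed.

Lemma glue_width i :
  #|sW i :|: (\bigcup_(s | sa i s) sX i s) :|: (\bigcup_(s | sa s i) sX s i)| <= k.
Proof.
case: i => [x|x].
  apply: leq_trans (wd2 x); apply: subset_leq_card; apply/subsetP=> u.
  rewrite !inE => /orP[/orP[->//|]|].
    case/bigcupP=> [[s|s]] //=; last by rewrite inE.
    by move=> h us; rewrite (_ : u \in \bigcup_(s | a2 x s) X2 x s) ?orbT //; apply/bigcupP; exists s.
  case/bigcupP=> [[s|s]] //= h us.
  by apply/orP; right; apply/bigcupP; exists s.
apply: leq_trans (wd1 x); apply: subset_leq_card; apply/subsetP=> u.
rewrite !inE => /orP[/orP[->//|]|].
  case/bigcupP=> [[s|s]] //= h us.
  by rewrite (_ : u \in \bigcup_(s | a1 x s) X1 x s) ?orbT //; apply/bigcupP; exists s.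
case/bigcupP=> [[s|s]] //= h us; first by rewrite inE in us.
by apply/orP; right; apply/bigcupP; exists s.
Qed.

End Glue.

Lemma cog_nonempty (T : finType) (E : rel T) A : cog E A -> A != set0.
Proof.
elim=> [x _|A0 B0 _ _ hA _ _ _|A0 B0 _ _ hA _ _ _|A0 B0 _ _ hA _ _ _].
- by apply/set0Pn; exists x; rewrite inE.
all: by case/set0Pn: hA => x xA; apply/set0Pn; exists x; rewrite inE xA.
Qed.

Definition isl (T1 T2 : Type) (x : T1 + T2) := if x is inl _ then true else false.

Lemma closH (T1 T2 : finType) (E1 : rel T1) (E2 : rel T2) x p :
  path (ocomp E1 E2) x p -> ~~ isl x -> all (fun y => ~~ isl y) (x :: p).
Proof.
elim: p x => [|y p IH] x /=; first by move=> _ ->.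
case/andP => e pp nx; rewrite nx /=.
case: x e nx => [x|x] e nx; first by [].
case: y e pp => [y|y] e pp; first by [].
exact: IH pp isT.
Qed.

Lemma closG (T1 T2 : finType) (E1 : rel T1) (E2 : rel T2) x p :
  path (ocomp E1 E2) x p -> isl x -> isl (last x p) -> all (fun y => isl y) (x :: p).
Proof.
elim: p x => [|y p IH] x /=; first by move=> _ ->.
case/andP=> e pp lx ll; rewrite lx /=.
case: y e pp ll => [y|y] e pp ll; first exact: IH pp isT ll.
have := closH pp isT; move/allP/(_ (last (inr y) p) (mem_last _ _)).
by rewrite ll.
Qed.

Theorem lemma4p11 (T1 T2 : finType) (E1 : rel T1) (E2 : rel T2) :
  dcograph E1 -> dcograph E2 ->
  forall tw dtw : nat,
    is_treewidth (un (ocomp E1 E2)) tw ->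
    is_dtreewidth (ocomp E1 E2) dtw ->
    dtw < tw.
Proof.
move=> c1 c2 tw dtw [[I [t [B [[tree cov edges conn] wd]]]] _] [_ mindtw].
have /set0Pn [g0 _] := cog_nonempty c1.
have /set0Pn [h0 _] := cog_nonempty c2.
case: tree => tsym tirr tpos tcon tcard.
have bound : forall i, #|B i| <= tw.+1.
  move=> i; rewrite -wd /td_width.
  have h : #|B i| <= \max_(j : I) #|B j| by apply: (@leq_bigmax _ (fun j => #|B j|) i).
  exact: leq_trans h (leqSpred _).
have e0 : un (ocomp E1 E2) (inl g0) (inr h0) by [].
have [i0 /andP[gi0 hi0]] := edges _ _ e0.
pose UG := [set x : T1 + T2 | isl x].
pose UH := [set x : T1 + T2 | ~~ isl x].
have edgeU : forall (U : {set T1 + T2}) u v, u \in U -> v \in U -> ocomp E1 E2 u v ->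
    exists i, (u \in B i) && (v \in B i).
  move=> U u v uU vU e; have ue : un (ocomp E1 E2) u v by rewrite /un e.
  exact: edges ue.
have closUH : forall x p, path (ocomp E1 E2) x p -> x \in UH -> last x p \in UH ->
    all (fun y => y \in UH) (x :: p).
  move=> x p pp; rewrite !inE => xH _; have := closH pp xH.
  by apply: sub_all => y; rewrite inE.
have closUG : forall x p, path (ocomp E1 E2) x p -> x \in UG -> last x p \in UG ->
    all (fun y => y \in UG) (x :: p).
  move=> x p pp; rewrite !inE => xG lG; have := closG pp xG lG.
  by apply: sub_all => y; rewrite inE.
have apexH : forall u, u \in UH -> exists i, (inl g0 \in B i) && (u \in B i).
  move=> [u|u]; rewrite inE //= => _; apply: edges; by [].
have apexG : forall u, u \in UG -> exists i, (inr h0 \in B i) && (u \in B i).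
  move=> [u|u]; rewrite inE //= => _.
  have eu : un (ocomp E1 E2) (inl u) (inr h0) by [].
  by have [i /andP[a b]] := edges _ _ eu; exists i; rewrite a b.
have gH : inl g0 \notin UH by rewrite inE.
have hH : inr h0 \in UH by rewrite inE.
have hG : inr h0 \notin UG by rewrite inE.
have gG : inl g0 \in UG by rewrite inE.
have [J2 [a2 [r2 [X2 [W2 [[[nr2 up2 re2] ne2 dj2 sub2 cov2] [nm2 wd2]]]]]]] :=
  part tsym tcon tcard closUH (edgeU UH) conn gH gi0
    hH hi0 apexH bound.
have [J1 [a1 [r1 [X1 [W1 [[[nr1 up1 re1] ne1 dj1 sub1 cov1] [nm1 wd1]]]]]]] :=
  part tsym tcon tcard closUG (edgeU UG) conn hG hi0
    gG gi0 apexG bound.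
have disj : UH :&: UG = set0 by apply/setP => x; rewrite !inE; case: (isl x).
have covv : forall v, (v \in UH) || (v \in UG) by move=> v; rewrite !inE; case: (isl v).
have D := glue_dtd nr2 nr1 disj covv closUG up2 re2 ne2 dj2 sub2 cov2 nm2 up1 re1 ne1 dj1 sub1 cov1 nm1.
have Wd := glue_width r2 r1 wd2 wd1.
have hd : has_dtd (ocomp E1 E2) (dtd_width (sa a2 r2 a1 r1) (sX X2 X1) (sW W2 W1)).
  by exists (J2 + J1)%type, (sa a2 r2 a1 r1), (inl r2), (sX X2 X1), (sW W2 W1).
have hw : dtd_width (sa a2 r2 a1 r1) (sX X2 X1) (sW W2 W1) <= tw.-1.
  rewrite /dtd_width -subn1 -(subn1 tw); apply: leq_sub2r; apply/bigmax_leqP => r _; exact: Wd.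
have tw0 : 0 < tw.
  have s2 : [set inl g0; inr h0] \subset B i0 by apply/subsetP => x; rewrite !inE => /orP[] /eqP ->.
  have ne : (inl g0 : T1 + T2) != inr h0 by [].
  have := subset_leq_card s2; rewrite cards2 ne; have := bound i0.
  move=> a b; rewrite -ltnS; exact: leq_trans b a.
apply: leq_ltn_trans (mindtw _ hd) _; apply: leq_ltn_trans hw _; by rewrite ltn_predL.
Qed.
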